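(* Let $n,k$ be positive integers with $n\ge 3k$, and let $\mathcal F\subset\binom{[n]}{k}$ be an intersecting family with $|\mathcal F|\le \binom{n-1}{k-1}/(2k)$. Then $$|\mathcal D(\mathcal F)|\le\sum_{0\le \ell<k}\binom{n-1}{\ell}.$$
   Context: $[n]=\{1,\dots,n\}$; $\binom{[n]}{k}$ is the family of all $k$-element subsets of $[n]$. A family $\mathcal F$ is intersecting if $F\cap F'\neq\varnothing$ for all $F,F'\in\mathcal F$. $\mathcal D(\mathcal F):=\{F\setminus F' : F,F'\in\mathcal F\}$. *)

(* Defs.v *)
From mathcomp Require Import all_boot.
Set Implicit Arguments. Unset Strict Implicit. Unset Printing Implicit Defensive.

Definition uniform_fam (n k : nat) (F : {set {set 'I_n}}) : Prop :=
  forall A, A \in F -> #|A| = k.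

Definition intersecting (n : nat) (F : {set {set 'I_n}}) : Prop :=
  forall A B, A \in F -> B \in F -> A :&: B != set0.

Definition diff_family (n : nat) (F : {set {set 'I_n}}) : {set {set 'I_n}} :=
  [set A :\: B | A in F, B in F].

(* Main.v *)
Require Import Defs.
From mathcomp Require Import all_boot.
From mathcomp Require Import zify.

Lemma card_bigcup_le (I T : finType) (P : pred I) (G : I -> {set T}) :
  #|\bigcup_(i | P i) G i| <= \sum_(i | P i) #|G i|.
Proof.
elim/big_ind2: _ => /=.
- by rewrite cards0.
- move=> A m B p HA HB; rewrite cardsU.
  apply: leq_trans (leq_subr _ _) _; exact: leq_add.
- by [].
Qed.

Lemma sum_binS n' m :
  \sum_(0 <= l < m.+1) 'C(n'.+1, l) =
  \sum_(0 <= l < m.+1) 'C(n', l) + \sum_(0 <= l < m) 'C(n', l).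
Proof.
elim: m => [|m IH]; first by rewrite !big_nat1 big_geq // !bin0.
rewrite big_nat_recr //= IH binS !big_nat_recr //=. lia.
Qed.

Lemma bin_double n' m : 3 * m.+1 <= n'.+1 -> 2 * 'C(n', m) <= 'C(n', m.+1).
Proof.
move=> H.
have E := mul_bin_left n' m.
have : 2 * 'C(n', m) * m.+1 <= 'C(n', m.+1) * m.+1.
  rewrite [X in _ <= X]mulnC E mulnAC.
  apply: leq_mul => //; lia.
by rewrite leq_pmul2r.
Qed.

Lemma sum_le_bin n' m : 3 * m <= n'.+1 ->
  \sum_(0 <= l < m) 'C(n', l) <= 'C(n', m).
Proof.
elim: m => [|m IH] H; first by rewrite big_geq.
rewrite big_nat_recr //=.
have h1 := IH ltac:(lia).
have h2 := @bin_double n' m H.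
lia.
Qed.

Lemma arith n j f x : 3 * j.+1 <= n -> f * (2 * j.+1) <= 'C(n.-1, j.+1.-1) ->
  x <= \sum_(0 <= l < j) 'C(n, l) + f * j.+1 ->
  x <= \sum_(0 <= l < j.+1) 'C(n.-1, l).
Proof.
case: n => [|n'] Hn Hf h; first by lia.
rewrite /= in Hf *.
case: j Hn Hf h => [|i] Hn Hf h.
  rewrite big_geq // in h; rewrite big_nat1; lia.
rewrite sum_binS in h.
rewrite big_nat_recr //=.
have h1 := @sum_le_bin n' i ltac:(lia).
have h2 := @bin_double n' i ltac:(lia).
lia.
Qed.

Theorem mainTheorem3 (n k : nat) (F : {set {set 'I_n}}) :
  0 < k -> 3 * k <= n ->
  uniform_fam k F -> intersecting F ->
  #|F| * (2 * k) <= 'C(n.-1, k.-1) ->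
  #|diff_family F| <= \sum_(0 <= l < k) 'C(n.-1, l).
Proof.
case: k => [//|j] _ Hn Hu Hi Hf.
set L := [set X : {set 'I_n} | #|X| < j].
set T := \bigcup_(A in F) [set A :\ x | x in A].
have sub : diff_family F \subset L :|: T.
  apply/subsetP => X /imset2P [A B HA HB ->].
  rewrite in_setU.
  have hAB := Hi A B HA HB.
  have c1 : 0 < #|A :&: B| by rewrite card_gt0.
  have cD := cardsD A B.
  rewrite (Hu A HA) in cD.
  have [lt|ge] := ltnP #|A :\: B| j.
    by rewrite inE lt.
  apply/orP; right.
  have c2 : #|A :&: B| == 1.
    have : #|A :&: B| <= #|A| by apply: subset_leq_card; apply: subsetIl.
    rewrite (Hu A HA); move: cD ge c1; lia.
  case/cards1P: c2 => x Hx.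
  apply/bigcupP; exists A => //.
  have xAB : x \in A :&: B by rewrite Hx set11.
  have xA : x \in A by move: xAB; rewrite inE => /andP [].
  apply/imsetP; exists x => //.
  rewrite -Hx; apply/setP => y; rewrite !inE; case: (y \in A); case: (y \in B) => //.
have cL : #|L| <= \sum_(0 <= l < j) 'C(n, l).
  have -> : L = \bigcup_(l < j) [set X : {set 'I_n} | #|X| == l].
    apply/setP => X; rewrite inE; apply/idP/bigcupP.
      by move=> h; exists (Ordinal h) => //; rewrite inE.
    by case=> l _; rewrite inE => /eqP ->.
  apply: leq_trans (card_bigcup_le _ _ _ _) _.
  rewrite big_mkord; apply: leq_sum => l _.
  by rewrite card_draws card_ord.
have cT : #|T| <= #|F| * j.+1.
  apply: leq_trans (card_bigcup_le _ _ _ _) _.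
  rewrite -sum1_card big_distrl /=.
  apply: leq_sum => A HA; rewrite mul1n -(Hu A HA).
  exact: leq_imset_card.
have := subset_leq_card sub.
rewrite cardsU => h.
apply: (arith _ _ _ _ Hn Hf).
apply: leq_trans h _; apply: leq_trans (leq_subr _ _) _; exact: leq_add.
Qed.
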